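(* Let $(a_{n,k})_{n,k\ge 1}$ be complex numbers such that every series of the form $\sum_{n=1}^{\infty}\prod_{j=1}^{m}a_{n,k_j}$ (with $m\in\mathbb{N}$, $k_1,\dots,k_m\in\mathbb{N}$) converges. Let $m\in\mathbb{N}$, $k_1,\dots,k_m\in\mathbb{N}$ and $L=[k_1,\dots,k_m]$. Then $$\sum_{\substack{n_1,\dots,n_m\ge 1\\ \text{pairwise distinct}}}\ \prod_{j=1}^{m}a_{n_j,k_j}=\sum_{\sigma\in S_m}\operatorname{sign}(\sigma)\,\mathbb{A}_{\sigma,L}.$$
   Context: $S_m$ is the symmetric group on $\{1,\dots,m\}$ and $\operatorname{sign}(\sigma)$ the sign of a permutation. For $\sigma\in S_m$, write $\sigma$ as a product of disjoint cycles $C_1,\dots,C_{r}$, where fixed points are kept as cycles of length one (so the cycles partition $\{1,\dots,m\}$). Then $$\mathbb{A}_{\sigma,L}:=\prod_{t=1}^{r}\Big(\sum_{n=1}^{\infty}\prod_{i\in C_t}a_{n,k_i}\Big).$$ For example, for $\sigma=(1\,2\,4)(3\,6)(5)\in S_6$, $\mathbb{A}_{\sigma,L}=\big(\sum_n a_{n,k_1}a_{n,k_2}a_{n,k_4}\big)\big(\sum_n a_{n,k_3}a_{n,k_6}\big)\big(\sum_n a_{n,k_5}\big)$. *)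

(* Defs.v *)
From HB Require Import structures.
From mathcomp Require Import all_boot all_order all_algebra all_fingroup.
From mathcomp Require Import all_classical all_reals all_analysis.
From mathcomp Require Import complex.
Set Implicit Arguments. Unset Strict Implicit. Unset Printing Implicit Defensive.
Import Order.TTheory GRing.Theory Num.Theory.
Import numFieldTopology.Exports numFieldNormedType.Exports.
Local Open Scope classical_set_scope.
Local Open Scope ring_scope.

(* Complex numbers: R[i] for R a realType; topology = the one induced by the
   norm of the numClosedFieldType R[i]. Indices n, k start at 1. *)

Definition psum (C : numFieldType) (f : nat -> C) (N : nat) : C :=
  \sum_(1 <= n < N.+1) f n.

Definition series_converges (C : numFieldType) (f : nat -> C) : Prop :=
  cvg (psum f @ \oo).

Definition series_value (C : numFieldType) (f : nat -> C) : C :=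
  lim (psum f @ \oo).

(* A_{sigma,L} = prod over the cycles of sigma (fixed points included, these
   are the orbits of sigma) of sum_n prod_{i in cycle} a_{n,k_i} *)
Definition Asigma (C : numFieldType) (m : nat) (a : nat -> nat -> C)
  (k : 'I_m -> nat) (s : 'S_m) : C :=
  \prod_(Cy in porbits s) series_value (fun n => \prod_(i in Cy) a n (k i)).

(* truncated distinct sum: over pairwise distinct n_1..n_m in {1..N}
   (encoded as injective f : 'I_m -> 'I_N, n_j = f j + 1) *)
Definition distinct_psum (C : numFieldType) (m : nat) (a : nat -> nat -> C)
  (k : 'I_m -> nat) (N : nat) : C :=
  \sum_(f : {ffun 'I_m -> 'I_N} | injectiveb f) \prod_(j < m) a (f j).+1 (k j).

(* Main.v *)
Require Import Defs.
From HB Require Import structures.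
From mathcomp Require Import all_boot all_order all_algebra all_fingroup.
From mathcomp Require Import all_classical all_reals all_analysis.
From mathcomp Require Import complex.
Import Order.TTheory GRing.Theory Num.Theory.
Import numFieldTopology.Exports numFieldNormedType.Exports.
Local Open Scope classical_set_scope.
Local Open Scope ring_scope.

Definition stab {m N} (s : 'S_m) (g : {ffun 'I_m -> 'I_N}) := [forall i, g (s i) == g i].
Section Exp.
Variable C : comRingType.
Variables (m N : nat) (s : 'S_m) (x : 'I_m -> 'I_N.+1 -> C).

Lemma stab_porbit (g : {ffun 'I_m -> 'I_N.+1}) : stab s g ->
  forall y z, y \in porbit s z -> g y = g z.
Proof.
move=> /forallP H y z /porbitP [i ->]; elim: i => [|i IH]; first by rewrite expg0 perm1.
by rewrite expgSr permM; apply/eqP; rewrite (eqP (H _)) IH.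
Qed.

Lemma porbit_in Cy i : Cy \in porbits s -> i \in Cy -> porbit s i = Cy.
Proof.
case/imsetP => y _ -> iy; apply/eqP; by rewrite eq_porbit_mem.
Qed.

Lemma expand_orbits :
  \prod_(Cy in porbits s) \sum_(n : 'I_N.+1) \prod_(i in Cy) x i n =
  \sum_(g : {ffun 'I_m -> 'I_N.+1} | stab s g) \prod_i x i (g i).
Proof.
rewrite (big_distr_big_dep ord0) /=.
pose h (F : {ffun {set 'I_m} -> 'I_N.+1}) : {ffun 'I_m -> 'I_N.+1} :=
  [ffun i => F (porbit s i)].
pose h' (g : {ffun 'I_m -> 'I_N.+1}) : {ffun {set 'I_m} -> 'I_N.+1} :=
  [ffun Cy => if Cy \in porbits s then (if [pick y in Cy] is Some y then g y else ord0) else ord0].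
rewrite (reindex_onto h h') => [|g sg]; last first.
  apply/ffunP => i; rewrite !ffunE imset_f //.
  case: pickP => [y yi|/(_ i)]; last by rewrite porbit_id.
  exact: (stab_porbit _ sg _ _ yi).
symmetry; apply: eq_big => [F|F _]; last first.
  rewrite (partition_big (porbit s) (mem (porbits s))) /=; last by move=> i _; apply: imset_f.
  apply: eq_bigr => Cy CyP; apply: eq_big => [i|i /eqP <-]; last by rewrite ffunE.
  by apply/eqP/idP => [<-|iC]; [apply: porbit_id | apply: porbit_in].
have sh : stab s (h F).
  by apply/forallP => i; rewrite !ffunE; have := porbit_perm s 1 i; rewrite expg1 => ->.
rewrite sh /=; apply/eqP/familyP => [<- | H] .
  by move=> Cy; rewrite !ffunE /=; case: ifP.
apply/ffunP => Cy; rewrite !ffunE; have := H Cy; rewrite /=.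
have -> : (Cy \in in_mem^~ (mem (porbits s))) = (Cy \in porbits s) by [].
case: ifP => [CyP _ | _ /eqP -> //]; case: pickP => [y yC|]; first by rewrite ffunE (porbit_in _ _ CyP yC).
by case/imsetP: CyP => y _ -> /(_ y); rewrite porbit_id.
Qed.
End Exp.
Section Comb.
Variable C : numDomainType.
Variables (m N : nat).


Lemma sign_stab (g : {ffun 'I_m -> 'I_N}) :
  \sum_(s : 'S_m | stab s g) ((-1) ^+ s : C) = (injectiveb g)%:R.
Proof.
case: (boolP (injectiveb g)) => [/injectiveP ginj | /injectivePn [i [j nij gij]]].
  rewrite (big_pred1 1%g) ?odd_perm1 ?expr0 // => s; rewrite /stab.
  apply/forallP/eqP => [H | ->]; last by move=> i; rewrite perm1.
  by apply/permP => i; rewrite perm1; apply: ginj; apply/eqP/H.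
have gt y : g (tperm i j y) = g y.
  by case: (tpermP i j y) => // ->; [rewrite gij | rewrite -gij].
set S := \sum_(s | _) _.
have : S = - S.
  rewrite {1}/S (reindex_inj (mulIg (tperm i j))) /= -sumrN.
  apply: eq_big => [s|s _].
    by rewrite /stab; apply: eq_forallb => x; rewrite permM gt.
  by rewrite odd_permM odd_tperm nij signr_addb mulrN1.
move/eqP; rewrite -subr_eq0 opprK -mulr2n mulrn_eq0 /= => /eqP ->.
by [].
Qed.
End Comb.

Lemma finite_id (C : numDomainType) m N (x : 'I_m -> 'I_N.+1 -> C) :
  \sum_(f : {ffun 'I_m -> 'I_N.+1} | injectiveb f) \prod_j x j (f j) =
  \sum_(s : 'S_m) (-1) ^+ s *
     \prod_(Cy in porbits s) \sum_(n : 'I_N.+1) \prod_(i in Cy) x i n.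
Proof.
symmetry.
under eq_bigr => s _ do rewrite (@expand_orbits C m N s x) big_distrr big_mkcond /=.
rewrite exchange_big /= [RHS]big_mkcond /=; apply: eq_bigr => g _.
rewrite -big_mkcond /=.
under eq_bigr => s _ do rewrite /= mulrC.
rewrite -big_distrr /= sign_stab mulrC.
by case: (injectiveb g); rewrite ?mul1r ?mul0r.
Qed.

Section CvgBig.
Variable C : numFieldType.

Lemma cvg_bigsum (I : Type) (r : seq I) (P : pred I) (f : I -> nat -> C) (l : I -> C) :
  (forall i, P i -> f i @ \oo --> l i) ->
  (fun N => \sum_(i <- r | P i) f i N) @ \oo --> \sum_(i <- r | P i) l i.
Proof.
move=> H; elim: r => [|i r IH].
  rewrite big_nil; under eq_cvg do rewrite big_nil; exact: cvg_cst.
rewrite big_cons; under eq_cvg do rewrite big_cons.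
case: ifPn => // Pi; exact: cvgD (H _ Pi) IH.
Qed.

Lemma cvg_bigprod (I : Type) (r : seq I) (P : pred I) (f : I -> nat -> C) (l : I -> C) :
  (forall i, P i -> f i @ \oo --> l i) ->
  (fun N => \prod_(i <- r | P i) f i N) @ \oo --> \prod_(i <- r | P i) l i.
Proof.
move=> H; elim: r => [|i r IH].
  rewrite big_nil; under eq_cvg do rewrite big_nil; exact: cvg_cst.
rewrite big_cons; under eq_cvg do rewrite big_cons.
case: ifPn => // Pi; exact: cvgM (H _ Pi) IH.
Qed.
End CvgBig.

Theorem mainTheorem1 (R : realType) (a : nat -> nat -> R[i])
  (hconv : forall (p : nat) (l : 'I_p -> nat), (0 < p)%N ->
     (forall j, (0 < l j)%N) ->
     series_converges (fun n => \prod_(j < p) a n (l j)))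
  (m : nat) (k : 'I_m -> nat) (hm : (0 < m)%N) (hk : forall j, (0 < k j)%N) :
  distinct_psum a k @ \oo -->
    \sum_(s : 'S_m) (-1) ^+ s * Asigma a k s.
Proof.
have psumE (f : nat -> R[i]) N : psum f N.+1 = \sum_(n < N.+1) f n.+1.
  by rewrite /psum big_add1 /= big_mkord.
have -> : distinct_psum a k = fun N => distinct_psum a k N.
  by [].
rewrite -cvg_shiftS.
have E : [sequence distinct_psum a k n.+1]_n = fun N =>
   \sum_(s : 'S_m) (-1) ^+ s * \prod_(Cy in porbits s)
        psum (fun n => \prod_(i in Cy) a n (k i)) N.+1.
  apply: funext => N /=; rewrite /distinct_psum.
  rewrite (@finite_id _ m N (fun (j : 'I_m) (n : 'I_N.+1) => a n.+1 (k j))).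
  apply: eq_bigr => s _; congr (_ * _); apply: eq_bigr => Cy _.
  by rewrite psumE.
rewrite E; apply: cvg_bigsum => s _.
apply: cvgM; first exact: cvg_cst.
apply: cvg_bigprod => Cy CyP.
have : series_converges (fun n => \prod_(i in Cy) a n (k i)).
  have -> : (fun n => \prod_(i in Cy) a n (k i)) =
            (fun n => \prod_(j < #|Cy|) a n (k (enum_val j))).
    by apply: funext => n; rewrite big_enum_val.
  apply: hconv => //; case/imsetP: CyP => y _ ->.
  by rewrite card_gt0; apply/set0Pn; exists y; apply: porbit_id.
rewrite /series_converges /series_value => H.
by rewrite (cvg_shiftS (fun N => psum (fun n => \prod_(i in Cy) a n (k i)) N)).
Qed.
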